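(* Let $G$ be an upward planar digraph with maximum in- and outdegree at most two, and let $e=(u,v)$ be a transitive edge of $G$, i.e., there exists a directed path from $u$ to $v$ in $G$ different from $e$. Then $e$ is a bad edge in every upward planar embedding of $G$.
   Context: A planar drawing of a digraph is upward if every edge $(u,v)$ is drawn as a curve strictly increasing in $y$ from $u$ to $v$; an upward planar embedding is the equivalence class of upward planar drawings with the same left-to-right orderings of incoming edges and of outgoing edges around each vertex. If a vertex has two incoming (outgoing) edges, these are its left and right incoming (outgoing) edges according to the embedding. An edge $e=(u,v)$ is a bad edge if it is the left outgoing edge of $u$ and the left incoming edge of $v$, or the right outgoing edge of $u$ and the right incoming edge of $v$. *)

(* Defs.v *)
From mathcomp Require Import all_boot.
From Stdlib Require Import Reals.
Set Implicit Arguments. Unset Strict Implicit. Unset Printing Implicit Defensive.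

Record digraph := Digraph {
  vert : finType;
  edge : finType;
  src : edge -> vert;
  tgt : edge -> vert
}.

Definition simple_digraph (G : digraph) : Prop :=
  (forall e f : edge G, src e = src f -> tgt e = tgt f -> e = f) /\
  (forall e : edge G, src e <> tgt e).

Definition outdeg (G : digraph) (v : vert G) : nat := #|[set e | src e == v]|.
Definition indeg (G : digraph) (v : vert G) : nat := #|[set e | tgt e == v]|.

Fixpoint walk_from (G : digraph) (u v : vert G) (p : seq (edge G)) : Prop :=
  match p with
  | [::] => u = v
  | e :: p' => src e = u /\ walk_from (tgt e) v p'
  end.
Definition dpath (G : digraph) (u v : vert G) (p : seq (edge G)) : Prop :=
  p <> [::] /\ walk_from u v p.

Definition transitive_edge (G : digraph) (e : edge G) : Prop :=
  exists p, dpath (src e) (tgt e) p /\ p <> [:: e].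

Local Open Scope R_scope.

(* An upward planar drawing of G in the plane R^2: vertices are distinct
   points, each edge is a continuous curve [0,1] -> R^2 (given on all of R,
   only its restriction to [0,1] matters) from the source to the target with
   strictly increasing y-coordinate; curves pass through no vertex in their
   interior, and two distinct curves meet only at common endpoints. *)
Record upward_planar_drawing (G : digraph) := UPDrawing {
  px : vert G -> R;
  py : vert G -> R;
  cx : edge G -> R -> R;
  cy : edge G -> R -> R;
  pos_inj : forall a b, px a = px b -> py a = py b -> a = b;
  curve_cont : forall e, continuity (cx e) /\ continuity (cy e);
  curve_start : forall e, cx e 0 = px (src e) /\ cy e 0 = py (src e);
  curve_end : forall e, cx e 1 = px (tgt e) /\ cy e 1 = py (tgt e);
  curve_up : forall e s t, 0 <= s -> s < t -> t <= 1 -> cy e s < cy e t;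
  curve_avoid : forall e t w, 0 < t < 1 -> ~ (cx e t = px w /\ cy e t = py w);
  curve_nocross : forall e f s t, e <> f -> 0 <= s <= 1 -> 0 <= t <= 1 ->
      cx e s = cx f t -> cy e s = cy f t -> (s = 0 \/ s = 1) /\ (t = 0 \/ t = 1)
}.

Definition upward_planar (G : digraph) : Prop :=
  exists D : upward_planar_drawing G, True.

(* e1 lies to the left of e2 immediately above their common source u *)
Definition out_left (G : digraph) (D : upward_planar_drawing G) (e1 e2 : edge G) :=
  exists eps, 0 < eps /\
    forall s t, 0 < s <= 1 -> 0 < t <= 1 -> cy D e1 s = cy D e2 t ->
      cy D e1 s < py D (src e1) + eps -> cx D e1 s < cx D e2 t.

(* e1 lies to the left of e2 immediately below their common target v *)
Definition in_left (G : digraph) (D : upward_planar_drawing G) (e1 e2 : edge G) :=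
  exists eps, 0 < eps /\
    forall s t, 0 <= s < 1 -> 0 <= t < 1 -> cy D e1 s = cy D e2 t ->
      py D (tgt e1) - eps < cy D e1 s -> cx D e1 s < cx D e2 t.

(* left/right outgoing/incoming edges (meaningful when the degree is two) *)
Definition left_out (G : digraph) (D : upward_planar_drawing G) (e : edge G) :=
  exists e', e' <> e /\ src e' = src e /\ out_left D e e'.
Definition right_out (G : digraph) (D : upward_planar_drawing G) (e : edge G) :=
  exists e', e' <> e /\ src e' = src e /\ out_left D e' e.
Definition left_in (G : digraph) (D : upward_planar_drawing G) (e : edge G) :=
  exists e', e' <> e /\ tgt e' = tgt e /\ in_left D e e'.
Definition right_in (G : digraph) (D : upward_planar_drawing G) (e : edge G) :=
  exists e', e' <> e /\ tgt e' = tgt e /\ in_left D e' e.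

Definition bad_edge (G : digraph) (D : upward_planar_drawing G) (e : edge G) :=
  (left_out D e /\ left_in D e) \/ (right_out D e /\ right_in D e).

(* Main.v *)
Require Import Defs.
From Stdlib Require Import Reals Lra ClassicalEpsilon Classical.
From mathcomp Require Import all_boot.
Open Scope R_scope.
Set Implicit Arguments. Unset Strict Implicit.
Set Warnings "-notation-overridden".


Definition sincr (c : R -> R) := forall s t, 0 <= s -> s < t -> t <= 1 -> c s < c t.
Definition clamp (a b y : R) := Rmax a (Rmin b y).
Definition Tinv (c : R -> R) (y : R) : R :=
  epsilon (inhabits 0) (fun t => 0 <= t <= 1 /\ c t = clamp (c 0) (c 1) y).

Lemma sincr_le c s t : sincr c -> 0 <= s -> s <= t -> t <= 1 -> c s <= c t.
Proof. move=> H H1 H2 H3; destruct (Req_dec s t) as [->|Hn]; [lra|]. left; apply H; lra. Qed.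

Lemma sincr_rev c s t : sincr c -> 0 <= s <= 1 -> 0 <= t <= 1 -> c s < c t -> s < t.
Proof. move=> H Hs Ht Hc. destruct (Rlt_le_dec s t) as [|Hl]; [done|].
have := sincr_le H (proj1 Ht) Hl (proj2 Hs). lra. Qed.

Lemma clamp_in a b y : a <= b -> a <= clamp a b y <= b.
Proof. rewrite /clamp => H. split; [apply Rmax_l|]. apply Rmax_lub; [done|apply Rmin_l]. Qed.

Lemma clamp_id a b y : a <= y <= b -> clamp a b y = y.
Proof. rewrite /clamp => H. rewrite Rmin_right; [|lra]. rewrite Rmax_right; lra. Qed.

Lemma clamp_lip a b y z : a <= b -> Rabs (clamp a b y - clamp a b z) <= Rabs (y - z).
Proof. rewrite /clamp => H.
  unfold Rmax, Rmin; repeat destruct Rle_dec; repeat destruct Rle_dec;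
  unfold Rabs; repeat destruct Rcase_abs; lra. Qed.

Lemma Tinv_spec c y : continuity c -> sincr c ->
  0 <= Tinv c y <= 1 /\ c (Tinv c y) = clamp (c 0) (c 1) y.
Proof. move=> Hc Hs. rewrite /Tinv. apply epsilon_spec.
  have H01 : c 0 < c 1 by apply Hs; lra.
  have [Ha Hb] := clamp_in y (Rlt_le _ _ H01).
  set z := clamp _ _ y in Ha Hb *.
  have Hc' : continuity (fun t => c t - z).
  { apply continuity_minus; [done| apply continuity_const; by move=> ? ?]. }
  destruct (IVT_cor (fun t => c t - z) 0 1 Hc' (Rle_0_1)) as [t [Ht Hz]].
  { have : (c 0 - z) <= 0 by lra. have : 0 <= c 1 - z by lra. nra. }
  exists t. split; [done|]. simpl in Hz. lra. Qed.

Lemma Tinv_c c t : continuity c -> sincr c -> 0 <= t <= 1 -> Tinv c (c t) = t.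
Proof. move=> Hc Hs Ht. have [H1 H2] := Tinv_spec (c t) Hc Hs.
  rewrite clamp_id in H2; last first.
  { split; apply sincr_le; auto; lra. }
  destruct (Rtotal_order (Tinv c (c t)) t) as [H|[H|H]]; [|done|].
  - have := Hs _ _ (proj1 H1) H (proj2 Ht). lra.
  - have := Hs _ _ (proj1 Ht) H (proj2 H1). lra. Qed.

Lemma Tinv_mid c y : continuity c -> sincr c -> c 0 < y < c 1 ->
  0 < Tinv c y < 1 /\ c (Tinv c y) = y.
Proof. move=> Hc Hs Hy. have [H1 H2] := Tinv_spec y Hc Hs.
  rewrite clamp_id in H2; [|lra]. split; [|done].
  split.
  - destruct (Req_dec (Tinv c y) 0) as [E|E]; [rewrite E in H2; lra| lra].
  - destruct (Req_dec (Tinv c y) 1) as [E|E]; [rewrite E in H2; lra| lra]. Qed.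

Lemma Tinv_cont c : continuity c -> sincr c -> continuity (Tinv c).
Proof. move=> Hc Hs y.
  unfold continuity_pt, continue_in, limit1_in, limit_in. simpl. unfold R_dist.
  move=> eps Heps.
  have H01 : c 0 < c 1 by apply Hs; lra.
  have [[T0 T1] Tc] := Tinv_spec y Hc Hs.
  set t0 := Tinv c y in T0 T1 Tc *.
  have [d1 [Hd1 L1]] : exists d1, 0 < d1 /\ forall t, 0 <= t <= 1 ->
      c t0 - d1 < c t -> t0 - eps < t.
  { destruct (Rlt_le_dec (t0 - eps) 0) as [N|N].
    - exists 1; split; [lra|]. move=> t Ht _; lra.
    - exists (c t0 - c (t0 - eps)); split.
      + have := Hs (t0 - eps) t0 N ltac:(lra) T1. lra.
      + move=> t Ht Hlt. destruct (Rlt_le_dec (t0 - eps) t) as [|Hl]; [done|].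
        have := sincr_le Hs (proj1 Ht) Hl ltac:(lra). lra. }
  have [d2 [Hd2 L2]] : exists d2, 0 < d2 /\ forall t, 0 <= t <= 1 ->
      c t < c t0 + d2 -> t < t0 + eps.
  { destruct (Rlt_le_dec 1 (t0 + eps)) as [N|N].
    - exists 1; split; [lra|]. move=> t Ht _; lra.
    - exists (c (t0 + eps) - c t0); split.
      + have := Hs t0 (t0 + eps) T0 ltac:(lra) N. lra.
      + move=> t Ht Hlt. destruct (Rlt_le_dec t (t0 + eps)) as [|Hl]; [done|].
        have := @sincr_le c (t0 + eps) t Hs ltac:(lra) Hl (proj2 Ht). lra. }
  exists (Rmin d1 d2). split; [by apply Rmin_pos|].
  move=> x [_ Hx].
  have [[X0 X1] Xc] := Tinv_spec x Hc Hs.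
  have := clamp_lip x y (Rlt_le _ _ H01).
  rewrite -Xc -Tc => Hl.
  have Hm1 := Rmin_l d1 d2. have Hm2 := Rmin_r d1 d2.
  have Hd : Rabs (c (Tinv c x) - c t0) < Rmin d1 d2 by lra.
  have [A B] := Rabs_def2 _ _ Hd.
  have := L1 _ (conj X0 X1) ltac:(lra). have := L2 _ (conj X0 X1) ltac:(lra).
  move=> P Q. apply Rabs_def1; lra. Qed.

Lemma pos_nbhd g c : continuity g -> 0 < g c ->
  exists d, 0 < d /\ forall y, Rabs (y - c) < d -> 0 < g y.
Proof. move=> Hg Hc. have := Hg c.
  unfold continuity_pt, continue_in, limit1_in, limit_in. simpl. unfold R_dist.
  move=> H. have [d [Hd Hy]] := H (g c) Hc. exists d; split; [done|].
  move=> y Hyc. destruct (Req_dec y c) as [->|Hne]; [done|].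
  have := Hy y (conj (conj I (not_eq_sym Hne)) Hyc). move=> Habs.
  have [A B] := Rabs_def2 _ _ Habs. lra. Qed.

Lemma left_lim g c h : continuity g -> 0 < h ->
  (forall y, c - h < y < c -> g y < 0) -> g c <= 0.
Proof. move=> Hg Hh H. destruct (Rle_lt_dec (g c) 0) as [|Hp]; [done|].
  have [d [Hd Hy]] := pos_nbhd Hg Hp.
  set y := c - Rmin h d / 2.
  have Hm1 := Rmin_l h d. have Hm2 := Rmin_r h d. have Hm := Rmin_pos _ _ Hh Hd.
  have := H y ltac:(unfold y; lra). have := Hy y ltac:(unfold y; rewrite Rabs_left; lra). lra. Qed.

Lemma right_lim g c h : continuity g -> 0 < h ->
  (forall y, c < y < c + h -> 0 < g y) -> 0 <= g c.
Proof. move=> Hg Hh H. destruct (Rle_lt_dec 0 (g c)) as [|Hp]; [done|].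
  have Hg' : continuity (fun x => - g x) by apply continuity_opp.
  have [d [Hd Hy]] := @pos_nbhd (fun x => - g x) c Hg' ltac:(lra).
  set y := c + Rmin h d / 2.
  have Hm1 := Rmin_l h d. have Hm2 := Rmin_r h d. have Hm := Rmin_pos _ _ Hh Hd.
  have := H y ltac:(unfold y; lra). have := Hy y ltac:(unfold y; rewrite Rabs_right; lra). lra. Qed.

Lemma left_lim' g c h : continuity g -> 0 < h ->
  (forall y, c - h < y < c -> 0 < g y) -> 0 <= g c.
Proof. move=> Hg Hh H.
  have := @left_lim (fun x => - g x) c h (continuity_opp _ Hg) Hh.
  move=> K. have := K ltac:(move=> y Hy; have := H y Hy; lra). lra. Qed.

Lemma right_lim' g c h : continuity g -> 0 < h ->
  (forall y, c < y < c + h -> g y < 0) -> g c <= 0.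
Proof. move=> Hg Hh H.
  have := @right_lim (fun x => - g x) c h (continuity_opp _ Hg) Hh.
  move=> K. have := K ltac:(move=> y Hy; have := H y Hy; lra). lra. Qed.

Lemma sign_const g a b : continuity g -> a < b ->
  (forall y, a < y < b -> g y <> 0) ->
  (forall y, a < y < b -> g y < 0) \/ (forall y, a < y < b -> 0 < g y).
Proof. move=> Hg Hab Hn. set m := (a + b) / 2.
  have Hm : a < m < b by unfold m; lra.
  have ivt : forall x z, a < x < b -> a < z < b -> x <= z -> g x * g z <= 0 -> False.
  { move=> x z Hx Hz Hxz Hp. destruct (IVT_cor g x z Hg Hxz Hp) as [w [Hw Hw0]].
    apply (Hn w); [lra|done]. }
  destruct (Rtotal_order (g m) 0) as [Hl|[H0|Hp]].
  - left. move=> y Hy. destruct (Rtotal_order (g y) 0) as [|[H0|Hp]]; [done| by case: (Hn y Hy)|].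
    exfalso. destruct (Rle_lt_dec y m) as [Hle|Hlt].
    + apply (ivt y m Hy Hm Hle). nra.
    + apply (ivt m y Hm Hy (Rlt_le _ _ Hlt)). nra.
  - by case: (Hn m Hm).
  - right. move=> y Hy. destruct (Rtotal_order (g y) 0) as [Hl|[H0|Hp']]; [| by case: (Hn y Hy)|done].
    exfalso. destruct (Rle_lt_dec y m) as [Hle|Hlt].
    + apply (ivt y m Hy Hm Hle). nra.
    + apply (ivt m y Hm Hy (Rlt_le _ _ Hlt)). nra. Qed.


Definition X (G : digraph) (D : upward_planar_drawing G) (f : edge G) (y : R) :=
  cx D f (Tinv (cy D f) y).

Lemma cy_sincr G (D : upward_planar_drawing G) f : sincr (cy D f).
Proof. move=> s t; apply curve_up. Qed.
Lemma cy_cont G (D : upward_planar_drawing G) f : continuity (cy D f).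
Proof. exact: (proj2 (curve_cont D f)). Qed.

Lemma X_at G (D : upward_planar_drawing G) f t : 0 <= t <= 1 -> X D f (cy D f t) = cx D f t.
Proof. move=> Ht. by rewrite /X Tinv_c //; [apply cy_cont|apply cy_sincr]. Qed.

Lemma X_cont G (D : upward_planar_drawing G) f : continuity (X D f).
Proof. have := @continuity_comp (Tinv (cy D f)) (cx D f) (Tinv_cont (cy_cont D f) (cy_sincr D f)) (proj1 (curve_cont D f)).
  by []. Qed.

Lemma edge_up G (D : upward_planar_drawing G) f : py D (src f) < py D (tgt f).
Proof. have := curve_up D f (Rle_refl 0) Rlt_0_1 (Rle_refl 1).
  by rewrite (proj2 (curve_start D f)) (proj2 (curve_end D f)). Qed.

Lemma mid_param G (D : upward_planar_drawing G) f y : py D (src f) < y < py D (tgt f) ->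
  exists t, 0 < t < 1 /\ cy D f t = y /\ X D f y = cx D f t.
Proof. move=> Hy. rewrite -(proj2 (curve_start D f)) -(proj2 (curve_end D f)) in Hy.
  have [Ht Hc] := Tinv_mid (cy_cont D f) (cy_sincr D f) Hy.
  exists (Tinv (cy D f) y); split; [done|split; [done|done]]. Qed.

Definition SL G (D : upward_planar_drawing G) (e f : edge G) :=
  forall y, py D (src f) < y < py D (tgt f) -> X D e y < X D f y.
Definition SR G (D : upward_planar_drawing G) (e f : edge G) :=
  forall y, py D (src f) < y < py D (tgt f) -> X D f y < X D e y.

Lemma dich G (D : upward_planar_drawing G) e f : f <> e ->
  py D (src e) <= py D (src f) -> py D (tgt f) <= py D (tgt e) -> SL D e f \/ SR D e f.
Proof. move=> Hfe H1 H2.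
  have Hc : continuity (fun y => X D e y - X D f y).
  { move=> x; apply continuity_pt_minus; apply X_cont. }
  have Hnz : forall y, py D (src f) < y < py D (tgt f) -> X D e y - X D f y <> 0.
  { move=> y Hy Heq.
    have [te [Hte [Hce Hxe]]] := @mid_param G D e y ltac:(lra).
    have [tf [Htf [Hcf Hxf]]] := @mid_param G D f y Hy.
    have := @curve_nocross G D e f te tf (not_eq_sym Hfe) ltac:(lra) ltac:(lra).
    move=> K. have [[A|A] _] := K ltac:(lra) ltac:(lra); lra. }
  have [Hl|Hr] := sign_const Hc (edge_up D f) Hnz.
  - left => y Hy; have := Hl y Hy; lra.
  - right => y Hy; have := Hr y Hy; lra. Qed.

Lemma vertex G (D : upward_planar_drawing G) e a b :
  tgt a = src b -> py D (src e) < py D (tgt a) < py D (tgt e) ->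
  (SL D e b \/ SR D e b) ->
  (SL D e a -> SL D e b) /\ (SR D e a -> SR D e b).
Proof. move=> Hab Hw Hd.
  set w := tgt a. set yw := py D w.
  have [te [Hte [Hce Hxe]]] := @mid_param G D e yw Hw.
  have Hav := @curve_avoid G D e te w Hte.
  have Xa : X D a yw = px D w.
  { have := @X_at G D a 1 ltac:(lra). rewrite (proj1 (curve_end D a)) (proj2 (curve_end D a)). done. }
  have Xb : X D b yw = px D w.
  { have := @X_at G D b 0 ltac:(lra). rewrite (proj1 (curve_start D b)) (proj2 (curve_start D b)) -Hab. done. }
  have Hz : X D e yw <> px D w.
  { move=> E; apply Hav; split; [rewrite -Hxe; done|done]. }
  have Ha := edge_up D a. have Hb := edge_up D b. rewrite -Hab in Hb.
  have Hca : continuity (fun y => X D e y - X D a y).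
  { move=> x; apply continuity_pt_minus; apply X_cont. }
  have Hcb : continuity (fun y => X D e y - X D b y).
  { move=> x; apply continuity_pt_minus; apply X_cont. }
  split.
  - move=> HL. have := @left_lim _ yw (yw - py D (src a)) Hca ltac:(unfold yw, w; lra).
    move=> K. have := K ltac:(move=> y Hy; have := HL y ltac:(unfold yw,w in Hy; lra); lra).
    rewrite Xa => Hle. case: Hd => // HR.
    have := @right_lim _ yw (py D (tgt b) - yw) Hcb ltac:(unfold yw, w; lra).
    move=> K'. have := K' ltac:(move=> y Hy; have := HR y ltac:(unfold yw,w in Hy; rewrite -Hab; lra); lra).
    rewrite Xb => Hge. exfalso; apply Hz; lra.
  - move=> HR. have := @left_lim' _ yw (yw - py D (src a)) Hca ltac:(unfold yw, w; lra).
    move=> K. have := K ltac:(move=> y Hy; have := HR y ltac:(unfold yw,w in Hy; lra); lra).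
    rewrite Xa => Hle. case: Hd => // HL.
    have := @right_lim' _ yw (py D (tgt b) - yw) Hcb ltac:(unfold yw, w; lra).
    move=> K'. have := K' ltac:(move=> y Hy; have := HL y ltac:(unfold yw,w in Hy; rewrite -Hab; lra); lra).
    rewrite Xb => Hge. exfalso; apply Hz; lra. Qed.

Lemma walk_up G (D : upward_planar_drawing G) v : forall q w, walk_from w v q ->
  py D w <= py D v /\ (q <> [::] -> py D w < py D v).
Proof. elim=> [|f q IH] w /=.
  - move=> ->; split; [lra|done].
  - move=> [Hs Hw]. have [A _] := IH _ Hw. have := edge_up D f. rewrite Hs.
    move=> H; split; [lra|move=> _; lra]. Qed.

Lemma walk_last G (v : vert G) : forall q a w, walk_from w v (a :: q) -> tgt (last a q) = v.
Proof. elim=> [|b q IH] a w /=.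
  - by move=> [_ ->].
  - move=> [_ H]. exact: (IH b (tgt a) H). Qed.

Lemma noe G (D : upward_planar_drawing G) (e : edge G) v : forall q w, walk_from w v q ->
  py D (src e) < py D w -> forall f, f \in q -> f <> e.
Proof. elim=> [|g q IH] w /=; first by [].
  move=> [Hs Hw] Hlt f.
  rewrite in_cons => /orP [/eqP ->|Hf].
  - move=> E; rewrite E in Hs; rewrite Hs in Hlt; lra.
  - apply: (IH _ Hw _ f Hf). have := edge_up D g. rewrite Hs. lra. Qed.

Lemma propag G (D : upward_planar_drawing G) (e : edge G) : forall q a,
  walk_from (src a) (tgt e) (a :: q) -> (forall f, f \in a :: q -> f <> e) ->
  py D (src e) <= py D (src a) ->
  (SL D e a -> SL D e (last a q)) /\ (SR D e a -> SR D e (last a q)).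
Proof. elim=> [|b q IH] a /=; first by [].
  move=> [_ [Hb Hw]] Hne Hse.
  have Hbq : walk_from (src b) (tgt e) (b :: q) by split.
  have [_ Hwv] := walk_up D Hbq.
  have Hwv' := Hwv ltac:(done).
  have Hup := edge_up D a.
  have [Htb _] := walk_up D Hw.
  have Hd : SL D e b \/ SR D e b.
  { apply dich.
    - apply Hne. by rewrite !in_cons eqxx orbT.
    - rewrite Hb. lra.
    - done. }
  have [V1 V2] := @vertex G D e a b (esym Hb) ltac:(rewrite Hb in Hwv'; lra) Hd.
  have [I1 I2] := IH b Hbq ltac:(move=> f Hf; apply Hne; by rewrite in_cons Hf orbT)
     ltac:(rewrite Hb; lra).
  split => H; [apply I1, V1, H | apply I2, V2, H]. Qed.

Theorem mainTheorem4 (G : digraph) :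
  simple_digraph G ->
  upward_planar G ->
  (forall v : vert G, (indeg v <= 2)%N /\ (outdeg v <= 2)%N) ->
  forall e : edge G, transitive_edge e ->
  forall D : upward_planar_drawing G, bad_edge D e.
Proof.
  move=> _ _ _ e [p [[Hpne Hw] Hpe]] D.
  case: p Hpne Hw Hpe => [|a q] // _ Hw Hpe.
  have [Hsa Hwq] := Hw.
  have Hae : a <> e.
  { move=> E. subst a. case: q Hw Hwq Hpe => [|f q] Hw Hwq Hpe; first done.
    have Hwq' : walk_from (tgt e) (tgt e) (f :: q) by [].
    have [_ H] := walk_up D Hwq'. have := H ltac:(done). lra. }
  have Hne : forall f, f \in a :: q -> f <> e.
  { move=> f. rewrite in_cons => /orP [/eqP ->|Hf]; first done.
    apply: (@noe G D e _ _ _ Hwq _ f Hf). have := edge_up D a. rewrite Hsa. lra. }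
  have [Hta _] := walk_up D Hwq.
  have Hwa : walk_from (src a) (tgt e) (a :: q) by rewrite Hsa.
  have [P1 P2] := @propag G D e q a Hwa Hne ltac:(rewrite Hsa; lra).
  set b := last a q in P1 P2.
  have Hbe : b <> e by apply Hne; rewrite /b mem_last.
  have Htb : tgt b = tgt e := walk_last Hw.
  have Hua := edge_up D a. have Hub := edge_up D b.
  have Hue := edge_up D e.
  have Hua' := Hua. rewrite Hsa in Hua'. have Hub' := Hub. rewrite Htb in Hub'.
  have HS0 := proj2 (curve_start D e). have HE0 := proj2 (curve_end D e).
  have [HL|HR] := @dich G D e a Hae ltac:(rewrite Hsa; lra) Hta.
  - left; split.
    + exists a; split; [done|split; [done|]].
      exists (py D (tgt a) - py D (src e)); split; [lra|].
      move=> s t Hs Ht Heq Hlt.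
      rewrite -(@X_at G D e s) ?(@X_at G D a t) -?Heq; try lra.
      rewrite -(@X_at G D a t) -?Heq; try lra.
      apply HL. rewrite Hsa. split; [|lra].
      rewrite -HS0; apply curve_up; lra.
    + exists b; split; [done|split; [done|]].
      exists (py D (tgt e) - py D (src b)); split; [lra|].
      move=> s t Hs Ht Heq Hlt.
      rewrite -(@X_at G D e s); try lra.
      rewrite -(@X_at G D b t) -?Heq; try lra.
      apply (P1 HL). split; [lra|].
      rewrite Htb -HE0; apply curve_up; lra.
  - right; split.
    + exists a; split; [done|split; [done|]].
      exists (py D (tgt a) - py D (src a)); split; [lra|].
      move=> s t Hs Ht Heq Hlt.
      rewrite -(@X_at G D a s); try lra.
      rewrite -(@X_at G D e t) -?Heq; try lra.
      apply HR. split; [|lra].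
      rewrite -(proj2 (curve_start D a)); apply curve_up; lra.
    + exists b; split; [done|split; [done|]].
      exists (py D (tgt b) - py D (src b)); split; [lra|].
      move=> s t Hs Ht Heq Hlt.
      rewrite -(@X_at G D b s); try lra.
      rewrite -(@X_at G D e t) -?Heq; try lra.
      apply (P2 HR). split; [lra|].
      rewrite -(proj2 (curve_end D b)); apply curve_up; lra.
Qed.
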